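(* Let $d,k,m\in\mathbb{N}$ with $2k<m$, and let $N=m\cdot2(k+1)$. Let $\pi:\mathbb{Z}^d\to\mathbb{T}_N^d=\mathbb{Z}^d/(N\mathbb{Z})^d$ be the natural quotient map. Then for every set $\mathcal{S}\subset\mathbb{T}_N^d$ with $|\mathcal{S}|\le k$ there is some $\boldsymbol{v}\in\mathbb{Z}^d$ such that \[\bigcup_{\boldsymbol{t}\in\pi^{-1}(\mathcal{S})\cap(\boldsymbol{v}+[1,N]^d)}\big(\boldsymbol{t}+[-m,m]^d\big)\subset\boldsymbol{v}+[1,N]^d.\]
   Context: $[a,b]$ denotes the integer interval $\{a,a+1,\dots,b\}$ and $[a,b]^d$ its $d$-fold product in $\mathbb{Z}^d$. *)

(* Defs.v *)
From mathcomp Require Import all_boot all_order all_algebra.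
Set Implicit Arguments. Unset Strict Implicit. Unset Printing Implicit Defensive.
Import Order.TTheory GRing.Theory Num.Theory.
Local Open Scope ring_scope.

(* Points of Z^d are functions 'I_d -> int. The discrete torus T_N^d is
   {ffun 'I_d -> 'Z_N} (faithful for N >= 2, which holds here). *)
Definition torus (d N : nat) := {ffun 'I_d -> 'Z_N}.

Definition torus_proj (d N : nat) (t : 'I_d -> int) : torus d N :=
  [ffun i => (t i)%:~R].

Definition in_box (d : nat) (v : 'I_d -> int) (a b : int) (x : 'I_d -> int) : Prop :=
  forall i, v i + a <= x i <= v i + b.

(* Main.v *)
Require Import Defs.
From mathcomp Require Import all_boot all_order all_algebra.
From mathcomp Require Import zify.
Import Order.TTheory GRing.Theory Num.Theory.
Local Open Scope ring_scope.
Lemma Zp_int (N : nat) (z : int) : (1 < N)%N ->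
  (nat_of_ord (z%:~R : 'Z_N))%:Z = (z %% N%:Z)%Z.
Proof.
move=> HN.
have N0 : N%:Z != 0 by rewrite eqz_nat; lia.
have Np : 0 < N%:Z by rewrite ltz_nat; lia.
have := modz_ge0 z N0; have := ltz_pmod z Np.
case Er: (z %% N)%Z => [n|n] // Hlt _.
rewrite {1}(divz_eq z N) Er intrD intrM.
have E : forall k : nat, ((k%:Z)%:~R : 'Z_N) = k%:R by [].
rewrite !E pchar_Zp // mulr0 add0r.
rewrite val_Zp_nat // modn_small //.
Qed.
Lemma arith (N M J r q T V X : int) : 0 < M -> 0 <= J -> J + 2*M <= N -> 0 <= r < N ->
  (r < J \/ J + 2*M <= r) -> T = q*N + r -> V = J + M - 1 -> V+1 <= T <= V+N ->
  T - M <= X <= T + M -> V+1 <= X <= V+N.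
Proof.
move=> H1 H2 H3 H4 H5 H6 H7 H8 H9.
have [h|[h|[h|h]]] : q <= -1 \/ q = 0 \/ q = 1 \/ 2 <= q by lia.
- have : q * N <= - N by nia. lia.
- subst q; lia.
- subst q; lia.
- have : 2 * N <= q * N by nia. lia.
Qed.
Lemma free_slot (k : nat) (s : seq nat) : (size s <= k)%N -> exists j, (j <= k)%N /\ j \notin s.
Proof.
move=> Hs.
case: (boolP (all (fun j => j \in s) (iota 0 k.+1))) => [/allP H|/allPn [j Hj Hn]].
- have := uniq_leq_size (iota_uniq 0 k.+1) H. rewrite size_iota => h; by rewrite ltnNge Hs in h.
- exists j; split => //. rewrite mem_iota in Hj. lia.
Qed.

Theorem proposition10 (d k m : nat) (Hkm : (2 * k < m)%N)
  (S : {set torus d (m * (2 * (k + 1)))}) (HS : (#|S| <= k)%N) :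
  exists v : 'I_d -> int,
    forall t : 'I_d -> int,
      torus_proj (m * (2 * (k + 1))) t \in S ->
      in_box v 1 (m * (2 * (k + 1)))%N%:Z t ->
      forall x : 'I_d -> int,
        in_box t (- (m%:Z)) m%:Z x ->
        in_box v 1 (m * (2 * (k + 1)))%N%:Z x.
Proof.
set N := (m * (2 * (k + 1)))%N.
have HN : (1 < N)%N by rewrite /N; nia.
have HJ : forall i : 'I_d, exists j : nat, (j <= k)%N /\
    forall s : torus d N, s \in S -> ((nat_of_ord ((s : torus d N) i)) %/ (2 * m))%N != j.
  move=> i.
  have [j [Hj Hn]] := @free_slot k ([seq ((nat_of_ord ((s : torus d N) i)) %/ (2 * m))%N | s <- enum S]) 
     (ltac:(rewrite size_map -cardE; exact HS)).
  exists j; split => // s Hs; apply/eqP => E; move/negP: Hn; apply.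
  by apply/mapP; exists s; rewrite ?mem_enum.
have [J HJ'] := fin_all_exists HJ.
exists (fun i => (2 * m * J i)%N%:Z + m%:Z - 1).
move=> t Ht Hbox x Hx i.
have [HJk HJs] := HJ' i.
have Hr := HJs _ Ht.
have Ez := Zp_int N (t i) HN.
have Es : nat_of_ord (torus_proj N t i) = nat_of_ord ((t i)%:~R : 'Z_N) by rewrite /torus_proj ffunE.
rewrite Es in Hr.
set r := nat_of_ord ((t i)%:~R : 'Z_N) in Hr Ez.
have Hr' : (r < 2 * m * J i \/ 2 * m * J i + 2 * m <= r)%N.
  case: (ltnP r (2 * m * J i)) => h; [by left|right].
  case: (ltnP r (2 * m * J i + 2 * m)) => h2 //.
  exfalso; move/eqP: Hr; apply; apply/eqP; rewrite eqn_leq; apply/andP; split.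
  + rewrite -ltnS ltn_divLR; [lia|lia].
  + rewrite leq_divRL; [lia|lia].
have N0 : N%:Z != 0 by rewrite eqz_nat; lia.
have Np : 0 < N%:Z by rewrite ltz_nat; lia.
have := modz_ge0 (t i) N0; have := ltz_pmod (t i) Np.
rewrite -Ez => Hlt Hge.
apply: (@arith N%:Z m%:Z (2 * m * J i)%N%:Z r%:Z (t i %/ N)%Z (t i)).
- rewrite ltz_nat; lia.
- by [].
- rewrite -PoszD lez_nat /N; nia.
- by rewrite Hge Hlt.
- case: Hr' => h; [left|right]; rewrite ?ltz_nat -?PoszD ?lez_nat; lia.
- by rewrite Ez -divz_eq.
- by [].
- have := Hbox i; lia.
- have := Hx i; lia.
Qed.
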